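(* Let $R$ be a commutative ring in which $2$ is invertible, $I$ an ideal of $R$, and let $(Q,q)$ be a free quadratic space of rank $n=2r$, $r\ge1$, having an ordered basis $e_1,\dots,e_n$ with respect to which the matrix of $\langle\,,\,\rangle$ is $\widetilde{\psi}_r$. Let $M=Q\perp\mathbb{H}(R)$ and identify automorphisms of $M$ with matrices in $\mathrm{GL}_{n+2}(R)$ via the ordered basis $(e_1,\dots,e_n,x,f)$ (with respect to which the form has matrix $\widetilde{\psi}_{r+1}$). Then $\mathrm{EO}_{(R,I)}(Q,\mathbb{H}(R))=\mathrm{EO}_{n+2}(R,I)$.
   Context: A quadratic $R$-module $(Q,q)$ is a finitely generated projective module with quadratic form $q$ and bilinear form $\langle x,y\rangle=q(x+y)-q(x)-q(y)$ (so $\langle x,x\rangle=2q(x)$); a quadratic space if $z\mapsto\langle z,-\rangle$ is an isomorphism $Q\to Q^*$. $\mathbb{H}(R)=R x\oplus Rf$ with $q(ax+bf)=ab$, so $\langle x,f\rangle=1$, $\langle x,x\rangle=\langle f,f\rangle=0$; orthogonal sums carry the sum of forms. $e_{i,j}$ denotes the matrix unit; $\widetilde{\psi}_s=\sum_{i=1}^s(e_{2i-1,2i}+e_{2i,2i-1})$ ($2s\times 2s$). DSER transformations on $Q\perp\mathbb{H}(P)$ ($P$ f.g. projective, $\mathbb{H}(P)=P\oplus P^*$ with $q(y,g)=g(y)$): for $\alpha:Q\to P$ let $\alpha^*:P^*\to Q$ satisfy $\langle\alpha^*(g),z\rangle=g(\alpha(z))$ and $E_\alpha(z,y,g)=(z-\alpha^*(g),y+\alpha(z)-\tfrac12\alpha\alpha^*(g),g)$;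 for $\beta:Q\to P^*$ let $\beta^*:P\to Q$ satisfy $\langle\beta^*(y),z\rangle=\beta(z)(y)$ and $E^*_\beta(z,y,g)=(z-\beta^*(y),y,g+\beta(z)-\tfrac12\beta\beta^*(y))$. $\mathrm{EO}_R(Q,\mathbb{H}(P))$ is generated by all $E_\alpha,E^*_\beta$; $\mathrm{EO}_I(Q,\mathbb{H}(P))$ is generated by those with $\alpha(Q)\subseteq IP$, $\beta(Q)\subseteq IP^*$; $\mathrm{EO}_{(R,I)}(Q,\mathbb{H}(P))$ is the normal closure of $\mathrm{EO}_I(Q,\mathbb{H}(P))$ in $\mathrm{EO}_R(Q,\mathbb{H}(P))$. Even elementary orthogonal group: for $N=2s$, let $\sigma$ be the permutation of $\{1,\dots,N\}$ with $\sigma(2i)=2i-1$, $\sigma(2i-1)=2i$; for $i\neq j$, $i\ne\sigma(j)$ and $z\in R$, $oe_{i,j}(z)=I_N+ze_{i,j}-ze_{\sigma(j),\sigma(i)}$ (orthogonal for $\widetilde{\psi}_s$). $\mathrm{EO}_N(R)$ is generated by all $oe_{i,j}(z)$, $z\in R$; $\mathrm{EO}_N(I)$ by those with $z\in I$; $\mathrm{EO}_N(R,I)$ is the normal closure of $\mathrm{EO}_N(I)$ in $\mathrm{EO}_N(R)$. *)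

(* Defs.v *)
From HB Require Import structures.
From mathcomp Require Import all_boot all_order all_algebra.
Set Implicit Arguments. Unset Strict Implicit. Unset Printing Implicit Defensive.
Import Order.TTheory GRing.Theory.
Local Open Scope ring_scope.

(* Conventions: indices are 0-based.  The hyperbolic pairs are (0,1),(2,3),...
   so the permutation sigma of the paper (2i <-> 2i-1, 1-based) becomes
   k <-> sigma k below. *)
Definition sigma (k : nat) : nat := if odd k then k.-1 else k.+1.

Definition psi_mx (R : nzRingType) (m : nat) : 'M[R]_m :=
  \matrix_(i < m, j < m) ((j : nat) == sigma i)%:R.

Definition is_ideal (R : comNzRingType) (I : {pred R}) : Prop :=
  [/\ 0 \in I, (forall x y, x \in I -> y \in I -> x + y \in I)
    & (forall a x, x \in I -> a * x \in I)].

Inductive gen_grp (T : unitRingType) (S : T -> Prop) : T -> Prop :=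
| gen_one : gen_grp S 1
| gen_in x : S x -> gen_grp S x
| gen_inv x : gen_grp S x -> gen_grp S x^-1
| gen_mul x y : gen_grp S x -> gen_grp S y -> gen_grp S (x * y).

Definition normal_closure (T : unitRingType) (G H : T -> Prop) : T -> Prop :=
  gen_grp (fun x => exists g h, [/\ G g, H h & x = g * h * g^-1]).

Section Setting.
Variables (R : comUnitRingType) (n : nat).
(* Q = R^n (column coordinates w.r.t. e_1..e_n), bilinear form matrix psi_mx n;
   M = Q _|_ H(R) has coordinates (z, y, g) w.r.t. (e_1..e_n, x, f),
   i.e. vectors in 'cV_(n.+2): entries 0..n-1 = z, entry n = y, entry n+1 = g. *)

Definition getc m (v : 'cV[R]_m) (k : nat) : R :=
  if (insub k : option 'I_m) is Some i then v i 0 else 0.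

Definition zpart (v : 'cV[R]_(n.+2)) : 'cV[R]_n := \col_(i < n) getc v i.
Definition ypart (v : 'cV[R]_(n.+2)) : R := getc v n.
Definition gpart (v : 'cV[R]_(n.+2)) : R := getc v n.+1.
Definition mkvec (z : 'cV[R]_n) (y g : R) : 'cV[R]_(n.+2) :=
  \col_(i < n.+2) (if ((i : nat) < n)%N then getc z i else if (i : nat) == n then y else g).

Definition half : R := (2%:R)^-1.

(* alpha : Q -> P = R given by a row vector a; its adjoint alpha^* : P^* = R -> Q
   (characterized by <alpha^*(g), z> = g alpha(z)) is g |-> g * psi a^T. *)
Definition lin (a : 'rV[R]_n) (z : 'cV[R]_n) : R := (a *m z) 0 0.
Definition adj (a : 'rV[R]_n) (g : R) : 'cV[R]_n := g *: (psi_mx R n *m a^T).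

Definition E_alpha (a : 'rV[R]_n) (v : 'cV[R]_(n.+2)) : 'cV[R]_(n.+2) :=
  let z := zpart v in let y := ypart v in let g := gpart v in
  mkvec (z - adj a g) (y + lin a z - half * lin a (adj a g)) g.

Definition E_beta (b : 'rV[R]_n) (v : 'cV[R]_(n.+2)) : 'cV[R]_(n.+2) :=
  let z := zpart v in let y := ypart v in let g := gpart v in
  mkvec (z - adj b y) y (g + lin b z - half * lin b (adj b y)).

Definition fun_mx (F : 'cV[R]_(n.+2) -> 'cV[R]_(n.+2)) : 'M[R]_(n.+2) :=
  \matrix_(i, j) F (delta_mx j 0) i 0.

Definition DSER_gen (J : {pred R}) (A : 'M[R]_(n.+2)) : Prop :=
  (exists2 a : 'rV[R]_n, (forall j, a 0 j \in J) & A = fun_mx (E_alpha a)) \/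
  (exists2 b : 'rV[R]_n, (forall j, b 0 j \in J) & A = fun_mx (E_beta b)).

Definition EO_QH (J : {pred R}) : 'M[R]_(n.+2) -> Prop := gen_grp (DSER_gen J).
Definition EO_QH_rel (I : {pred R}) : 'M[R]_(n.+2) -> Prop :=
  normal_closure (EO_QH predT) (EO_QH I).

Definition oe (i j : 'I_(n.+2)) (z : R) : 'M[R]_(n.+2) :=
  \matrix_(k, l) (((k == l)%:R : R) + ((k == i) && (l == j))%:R * z
                  - (((k : nat) == sigma j) && ((l : nat) == sigma i))%:R * z).

Definition oe_gen (J : {pred R}) (A : 'M[R]_(n.+2)) : Prop :=
  exists i j : 'I_(n.+2), exists z, [/\ i != j, (i : nat) != sigma j, z \in J & A = oe i j z].

Definition EO_N (J : {pred R}) : 'M[R]_(n.+2) -> Prop := gen_grp (oe_gen J).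
Definition EO_N_rel (I : {pred R}) : 'M[R]_(n.+2) -> Prop :=
  normal_closure (EO_N predT) (EO_N I).
End Setting.

(* Main.v *)
From Pilot Require Import Defs.
From HB Require Import structures.
From mathcomp Require Import all_boot all_order all_algebra.
From mathcomp Require Import ring zify.
Set Implicit Arguments. Unset Strict Implicit. Unset Printing Implicit Defensive.
Import GRing.Theory.
Import Pilot.Defs.
Local Open Scope ring_scope.

Section Grp.
Variable T : unitRingType.

Lemma gen_grp_sub (S S' : T -> Prop) :
  (forall x, S x -> gen_grp S' x) -> forall x, gen_grp S x -> gen_grp S' x.
Proof.
move=> H x; elim=> [|y /H //|y _ IH|y z _ IHy _ IHz].
- exact: gen_one.
- exact: gen_inv.
- exact: gen_mul.
Qed.

Lemma gen_grp_unit (S : T -> Prop) :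
  (forall x, S x -> x \is a GRing.unit) -> forall x, gen_grp S x -> x \is a GRing.unit.
Proof.
move=> H x; elim=> [|y /H //|y _ IH|y z _ IHy _ IHz].
- exact: unitr1.
- by rewrite unitrV.
- by rewrite unitrMl.
Qed.

Lemma nc_unit (S1 S2 : T -> Prop) :
  (forall x, S1 x -> x \is a GRing.unit) -> (forall x, S2 x -> x \is a GRing.unit) ->
  forall x, normal_closure (gen_grp S1) (gen_grp S2) x -> x \is a GRing.unit.
Proof.
move=> H1 H2; apply: gen_grp_unit => x [g [h [Gg Hh ->]]].
have ug := gen_grp_unit H1 Gg; have uh := gen_grp_unit H2 Hh.
by rewrite !unitrMl ?unitrV.
Qed.

Lemma nc_conj (S1 S2 : T -> Prop) :
  (forall x, S1 x -> x \is a GRing.unit) -> (forall x, S2 x -> x \is a GRing.unit) ->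
  forall g x, gen_grp S1 g -> normal_closure (gen_grp S1) (gen_grp S2) x ->
  normal_closure (gen_grp S1) (gen_grp S2) (g * x * g^-1).
Proof.
move=> H1 H2 g x Gg Nx.
have ug := gen_grp_unit H1 Gg.
have HN := nc_unit H1 H2.
elim: Nx => [|y [g' [h [Gg' Hh ->]]]|y Ny IH|y z Ny IHy Nz IHz].
- by rewrite mulr1 mulrV //; exact: gen_one.
- apply: gen_in; exists (g * g'), h; split => //; first exact: gen_mul.
  have ug' := gen_grp_unit H1 Gg'.
  by rewrite invrM // !mulrA.
- have uy := HN _ Ny.
  have -> : g * y^-1 * g^-1 = (g * y * g^-1)^-1.
    by rewrite !invrM ?unitrV ?unitrMl ?unitrMr // invrK mulrA.
  exact: gen_inv.
- have -> : g * (y * z) * g^-1 = (g * y * g^-1) * (g * z * g^-1).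
    by rewrite !mulrA mulrVK.
  exact: gen_mul.
Qed.

Lemma nc_in (S1 S2 : T -> Prop) x : gen_grp S2 x -> normal_closure (gen_grp S1) (gen_grp S2) x.
Proof.
move=> Hx; apply: gen_in; exists 1, x; split => //; first exact: gen_one.
by rewrite mul1r invr1 mulr1.
Qed.

End Grp.

Lemma sigmaK k : sigma (sigma k) = k.
Proof.
rewrite /sigma; case: k => [|k] //=; case Hk: (odd k) => /=.
- by rewrite Hk.
- by rewrite Hk.
Qed.

Lemma sigma_neq k : (sigma k == k) = false.
Proof.
rewrite /sigma; case ok: (odd k); last first.
  by apply/negbTE; rewrite neq_ltn; apply/orP; right; exact: ltnSn.
case: k ok => [|k] //= _; apply/negbTE; rewrite neq_ltn; apply/orP; left; exact: ltnSn.
Qed.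

Lemma sigma_inj i j : (sigma i == sigma j) = (i == j).
Proof.
apply/eqP/eqP => [H|->//]; by rewrite -(sigmaK i) H sigmaK.
Qed.

Lemma eq_sigma i j : (i == sigma j) = (sigma i == j).
Proof. by rewrite -sigma_inj sigmaK. Qed.

Lemma sigma_even n : ~~ odd n -> sigma n = n.+1.
Proof. by rewrite /sigma => /negbTE ->. Qed.

Lemma sigma_evenS n : ~~ odd n -> sigma n.+1 = n.
Proof. by rewrite /sigma /= => ->. Qed.

Lemma sigma_ltn m k : ~~ odd m -> (k < m)%N -> (sigma k < m)%N.
Proof.
rewrite /sigma => om km; case ok: (odd k).
  by case: k km ok => // k /ltnW.
rewrite ltn_neqAle km andbT; apply/eqP => ekm.
by move: om; rewrite -ekm /= ok.
Qed.

Section Mx.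
Variables (R : comUnitRingType) (n : nat).
Local Notation Ea := (@E_alpha R n).
Local Notation Eb := (@E_beta R n).

Lemma getc_ord m (v : 'cV[R]_m) (i : 'I_m) : getc v i = v i 0.
Proof. by rewrite /getc; case: insubP => [j _ /val_inj -> //|]; rewrite ltn_ord. Qed.

Lemma getc_ge m (v : 'cV[R]_m) k : (m <= k)%N -> getc v k = 0.
Proof. by rewrite /getc; case: insubP => // j _ <-; rewrite leqNgt ltn_ord. Qed.

Lemma getcL m (c : R) (u v : 'cV[R]_m) k : getc (c *: u + v) k = c * getc u k + getc v k.
Proof. by rewrite /getc; case: insubP => [j _ _|_]; rewrite ?mxE ?mulr0 ?addr0. Qed.

Lemma zpartL c (u v : 'cV[R]_(n.+2)) : zpart (c *: u + v) = c *: zpart u + zpart v.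
Proof. by apply/matrixP => i j; rewrite !mxE getcL. Qed.
Lemma ypartL c (u v : 'cV[R]_(n.+2)) : ypart (c *: u + v) = c * ypart u + ypart v.
Proof. exact: getcL. Qed.
Lemma gpartL c (u v : 'cV[R]_(n.+2)) : gpart (c *: u + v) = c * gpart u + gpart v.
Proof. exact: getcL. Qed.
Lemma mkvecL c z y g z' y' g' :
  mkvec (c *: z + z') (c * y + y') (c * g + g') = c *: mkvec z y g + mkvec (R:=R) (n:=n) z' y' g'.
Proof. apply/matrixP => i j; rewrite !mxE; case: ifP => _; first by rewrite getcL. by case: ifP. Qed.

Lemma linL a c z z' : lin (R:=R) (n:=n) a (c *: z + z') = c * lin a z + lin a z'.
Proof. by rewrite /lin mulmxDr -scalemxAr !mxE. Qed.
Lemma linDl a b z : lin (R:=R) (n:=n) (a + b) z = lin a z + lin b z.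
Proof. by rewrite /lin mulmxDl !mxE. Qed.
Lemma linNl a z : lin (R:=R) (n:=n) (- a) z = - lin a z.
Proof. by rewrite /lin mulNmx !mxE. Qed.
Lemma adjL a c g g' : adj (R:=R) (n:=n) a (c * g + g') = c *: adj a g + adj a g'.
Proof. by rewrite /adj scalerDl scalerA. Qed.
Lemma adjDl a b g : adj (R:=R) (n:=n) (a + b) g = adj a g + adj b g.
Proof. by rewrite /adj linearD /= mulmxDr scalerDr. Qed.
Lemma adjNl a g : adj (R:=R) (n:=n) (- a) g = - adj a g.
Proof. by rewrite /adj linearN /= mulmxN scalerN. Qed.

Lemma psi_tr : (psi_mx R n)^T = psi_mx R n.
Proof. by apply/matrixP => i j; rewrite !mxE eq_sigma eq_sym. Qed.


Lemma lin_adj_sym a b g : lin (R:=R) (n:=n) a (adj b g) = lin b (adj a g).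
Proof.
have E : a *m (psi_mx R n *m b^T) = (b *m (psi_mx R n *m a^T))^T.
  by rewrite !trmx_mul trmxK psi_tr mulmxA.
by rewrite /lin /adj -!scalemxAr E !mxE.
Qed.

Lemma getc_lt m (v : 'cV[R]_m) k (H : (k < m)%N) : getc v k = v (Ordinal H) 0.
Proof. by rewrite -getc_ord. Qed.

Lemma ltn_n2 k : (k < n)%N -> (k < n.+2)%N.
Proof. by move=> H; apply: (leq_trans H); rewrite leqW. Qed.

Lemma zpart_mkvec z y g : zpart (mkvec (R:=R) (n:=n) z y g) = z.
Proof.
apply/matrixP => i j; rewrite !mxE (ord1 j) (getc_lt _ (ltn_n2 (ltn_ord i))) mxE /=.
by rewrite ltn_ord getc_ord.
Qed.

Lemma ypart_mkvec z y g : ypart (mkvec (R:=R) (n:=n) z y g) = y.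
Proof. by rewrite /ypart (getc_lt _ (ltnW (ltnSn n.+1))) mxE /= ltnn eqxx. Qed.

Lemma gpart_mkvec z y g : gpart (mkvec (R:=R) (n:=n) z y g) = g.
Proof.
rewrite /gpart (getc_lt _ (ltnSn n.+1)) mxE /= ltnNge leqnSn /=.
by have -> : (n.+1 == n) = false by elim: n.
Qed.

Lemma mkvec_parts v : mkvec (zpart v) (ypart v) (gpart v) = v :> 'cV[R]_(n.+2).
Proof.
apply/matrixP => k j; rewrite (ord1 j) mxE; case: ifP => [kn|kn0].
  by rewrite (getc_lt _ kn) mxE getc_ord.
case: ifP => [/eqP kn|kn]; first by rewrite /ypart -getc_ord kn.
have kE : (k : nat) = n.+1.
  apply/eqP; rewrite eqn_leq -ltnS ltn_ord /= ltn_neqAle eq_sym kn /=.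
  by rewrite leqNgt kn0.
by rewrite /gpart -getc_ord kE.
Qed.

Lemma linB a z z' : lin (R:=R) (n:=n) a (z - z') = lin a z - lin a z'.
Proof. by rewrite /lin mulmxBr !mxE. Qed.
Lemma linDr a z z' : lin (R:=R) (n:=n) a (z + z') = lin a z + lin a z'.
Proof. by rewrite /lin mulmxDr !mxE. Qed.
Lemma lin0 z : lin (R:=R) (n:=n) 0 z = 0.
Proof. by rewrite /lin mul0mx mxE. Qed.
Lemma adj0 g : adj (R:=R) (n:=n) 0 g = 0.
Proof. by rewrite /adj trmx0 mulmx0 scaler0. Qed.

Lemma fun_mxP (F : 'cV[R]_(n.+2) -> 'cV[R]_(n.+2)) :
  (forall c u v, F (c *: u + v) = c *: F u + F v) -> forall v, F v = fun_mx F *m v.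
Proof.
move=> HF v.
have F0 : F 0 = 0 by have := HF (-1) 0 0; rewrite scaler0 addr0 scaleN1r addNr.
have FD : {morph F : x y / x + y}.
  by move=> x y; rewrite -[x]scale1r HF !scale1r.
have FZ : forall c u, F (c *: u) = c *: F u.
  by move=> c u; rewrite -[c *: u]addr0 HF F0 addr0.
rewrite {1}[v]matrix_sum_delta.
under eq_bigr do rewrite big_ord1.
rewrite (big_morph F FD F0).
apply/matrixP => i j; rewrite (ord1 j) !mxE summxE; apply: eq_bigr => k _.
by rewrite FZ !mxE mulrC.
Qed.

Lemma fun_mx_comp (F G : 'cV[R]_(n.+2) -> 'cV[R]_(n.+2)) :
  (forall v, F v = fun_mx F *m v) -> fun_mx (fun v => F (G v)) = fun_mx F *m fun_mx G.
Proof.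
move=> HF; apply/matrixP => i j; rewrite [LHS]mxE [in LHS]HF !mxE.
by apply: eq_bigr => k _; rewrite !mxE.
Qed.

Lemma fun_mx_ext (F G : 'cV[R]_(n.+2) -> 'cV[R]_(n.+2)) :
  (forall v, F v = G v) -> fun_mx F = fun_mx G.
Proof. by move=> H; apply/matrixP => i j; rewrite !mxE H. Qed.

Lemma fun_mx_id : fun_mx (fun v : 'cV[R]_(n.+2) => v) = 1%:M.
Proof. by apply/matrixP => i j; rewrite !mxE andbT. Qed.

Lemma Ea_lin a c u v : Ea a (c *: u + v) = c *: Ea a u + Ea a v.
Proof.
rewrite /E_alpha zpartL ypartL gpartL -mkvecL; congr mkvec.
  by rewrite adjL scalerBr opprD addrACA.
rewrite adjL !linL; ring.
Qed.

Lemma Eb_lin a c u v : Eb a (c *: u + v) = c *: Eb a u + Eb a v.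
Proof.
rewrite /E_beta zpartL ypartL gpartL -mkvecL; congr mkvec.
  by rewrite adjL scalerBr opprD addrACA.
rewrite adjL !linL; ring.
Qed.

Hypothesis h2 : (2%:R : R) \is a GRing.unit.
Let H2 : half R * 2%:R = 1.
Proof. exact: mulVr. Qed.

Lemma Ea_add a b v : Ea a (Ea b v) = Ea (a + b) v.
Proof.
rewrite /E_alpha zpart_mkvec ypart_mkvec gpart_mkvec; congr mkvec.
  by rewrite adjDl opprD addrA addrAC.
rewrite linB adjDl !linDl !linDr.
rewrite [in LHS](_ : lin a (adj b _) = half R * 2%:R * lin a (adj b (gpart v))); last by rewrite H2 mul1r.
rewrite [lin b (adj a _)]lin_adj_sym; ring.
Qed.

Lemma Eb_add a b v : Eb a (Eb b v) = Eb (a + b) v.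
Proof.
rewrite /E_beta zpart_mkvec ypart_mkvec gpart_mkvec; congr mkvec.
  by rewrite adjDl opprD addrA addrAC.
rewrite linB adjDl !linDl !linDr.
rewrite [in LHS](_ : lin a (adj b _) = half R * 2%:R * lin a (adj b (ypart v))); last by rewrite H2 mul1r.
rewrite [lin b (adj a _)]lin_adj_sym; ring.
Qed.

Lemma Ea0 v : Ea 0 v = v.
Proof. by rewrite /E_alpha adj0 !lin0 subr0 addr0 mulr0 subr0 mkvec_parts. Qed.
Lemma Eb0 v : Eb 0 v = v.
Proof. by rewrite /E_beta adj0 !lin0 subr0 addr0 mulr0 subr0 mkvec_parts. Qed.

Definition MA a := fun_mx (E_alpha (R:=R) (n:=n) a).
Definition MB a := fun_mx (E_beta (R:=R) (n:=n) a).

Lemma MA_add a b : MA a *m MA b = MA (a + b).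
Proof.
rewrite /MA -fun_mx_comp; last exact/fun_mxP/Ea_lin.
by apply: fun_mx_ext => v; rewrite Ea_add.
Qed.
Lemma MB_add a b : MB a *m MB b = MB (a + b).
Proof.
rewrite /MB -fun_mx_comp; last exact/fun_mxP/Eb_lin.
by apply: fun_mx_ext => v; rewrite Eb_add.
Qed.
Lemma MA0 : MA 0 = 1%:M.
Proof. by rewrite /MA -fun_mx_id; apply: fun_mx_ext => v; rewrite Ea0. Qed.
Lemma MB0 : MB 0 = 1%:M.
Proof. by rewrite /MB -fun_mx_id; apply: fun_mx_ext => v; rewrite Eb0. Qed.

End Mx.




Lemma comm4 (T : pzRingType) (Y Z : T) :
  Y * Y = 0 -> Z * Z = 0 -> Y * Z * Y = 0 -> Z * Y * Z = 0 ->
  (1 + Y) * (1 + Z) * (1 - Y) * (1 - Z) = 1 + (Y * Z - Z * Y).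
Proof.
move=> HY HZ HYZY HZYZ.
have S1 : (1 + Y) * (1 + Z) * (1 - Y) = 1 + Z + (Y * Z - Z * Y).
  rewrite !(mulrDl, mulrDr, mulrBl, mulrBr, mul1r, mulr1, mulrN) ?mulrA ?HY ?HYZY.
  rewrite !addr0 -addrA; congr (_ + _).
  by rewrite opprD addrACA subrr add0r.
rewrite S1.
rewrite !(mulrDl, mulrDr, mulrBl, mulrBr, mul1r, mulr1, mulrN) ?mulrA ?HZ ?HZYZ.
by rewrite mulNr HZYZ -(mulrA Y) HZ mulr0 !oppr0 !addr0 subrK.
Qed.

Section OE.
Variables (R : comUnitRingType) (n : nat).
Hypothesis hn : ~~ odd n.
Local Notation N := n.+2.

Lemma hN : ~~ odd n.+2.
Proof. by rewrite /= negbK. Qed.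

Definition sg (k : 'I_N) : 'I_N := Ordinal (sigma_ltn hN (ltn_ord k)).
Definition nn : 'I_N := Ordinal (ltnW (ltnSn n.+1)).
Definition wj (j : 'I_n) : 'I_N := Ordinal (ltn_n2 (ltn_ord j)).
Local Notation D := (@delta_mx R N N).

Lemma oeE i j z : oe i j z = 1%:M + z *: (D i j - D (sg j) (sg i)).
Proof. apply/matrixP => k l; rewrite !mxE; ring. Qed.

Lemma prodD (p q r s t u v w : 'I_N) (a b : R) :
  (a *: (D p q - D r s)) * (b *: (D t u - D v w)) =
  (a * b) *: (D p u *+ (q == t) - D p w *+ (q == v) - D r u *+ (s == t) + D r w *+ (s == v)).
Proof.
rewrite -mulmxE -scalemxAl -scalemxAr scalerA !(mulmxBl, mulmxBr) !mul_delta_mx_cond;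
by rewrite opprD opprK addrA.
Qed.

Lemma prodD1 (p q t u v w : 'I_N) (a b : R) :
  (a *: D p q) * (b *: (D t u - D v w)) =
  (a * b) *: (D p u *+ (q == t) - D p w *+ (q == v)).
Proof.
by rewrite -mulmxE -scalemxAl -scalemxAr scalerA !(mulmxBl, mulmxBr) !mul_delta_mx_cond.
Qed.

Lemma sigma_neq' k : (k == sigma k) = false.
Proof. by rewrite eq_sym sigma_neq. Qed.

Lemma sg_val k : (sg k : nat) = sigma k. Proof. by []. Qed.
Lemma eq_ordE (x y : 'I_N) : (x == y) = ((x : nat) == y). Proof. by []. Qed.

Lemma oe_inv (i j : 'I_N) (z : R) : i != j -> (i : nat) != sigma j -> oe i j z * oe i j (- z) = 1.
Proof.
move=> ij isj; rewrite !oeE.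
set Y := D i j - D (sg j) (sg i).
have HY : (z *: Y) * (- z *: Y) = 0.
  have ij' : ((i : nat) == j) = false := negbTE ij.
  rewrite prodD !eq_ordE !sg_val sigma_inj sigma_neq' ij' eq_sym ij'.
  by rewrite sigma_neq !mulr0n ?subr0 ?sub0r ?oppr0 addr0 scaler0.
rewrite -[1%:M]/(1 : 'M[R]_N).
by rewrite mulrDl !mulrDr !mul1r mulr1 HY addr0 scaleNr subrK.
Qed.

Lemma nn_val : (nn : nat) = n. Proof. by []. Qed.
Lemma sgnn_val : (sg nn : nat) = n.+1. Proof. by rewrite sg_val nn_val sigma_even. Qed.

Lemma oe_comm (i j : 'I_N) (a b : R) : (i < n)%N -> (j < n)%N -> i != j ->
  oe i j (a * b) = oe i nn a * oe nn j b * oe i nn (- a) * oe nn j (- b).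
Proof.
move=> Hi Hj ij.
have ij' : ((i : nat) == j) = false := negbTE ij.
have ji' : ((j : nat) == i) = false by rewrite eq_sym.
have Hsi : (sigma i < n)%N := sigma_ltn hn Hi.
have Hsj : (sigma j < n)%N := sigma_ltn hn Hj.
have Hi1 : (i < n.+1)%N := ltnW Hi.
have Hj1 : (j < n.+1)%N := ltnW Hj.
have Hsi1 : (sigma i < n.+1)%N := ltnW Hsi.
have Hsj1 : (sigma j < n.+1)%N := ltnW Hsj.
have Hn1 : (n < n.+1)%N := ltnSn n.
rewrite !oeE !scaleNr -[1%:M]/(1 : 'M[R]_N).
set Y := a *: _; set Z := b *: _.
have E : forall x y : 'M[R]_N, x + - y = x - y by [].
have HF := (ltn_eqF Hi, gtn_eqF Hi, ltn_eqF Hj, gtn_eqF Hj, ltn_eqF Hsi, gtn_eqF Hsi,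
   ltn_eqF Hsj, gtn_eqF Hsj, ltn_eqF Hi1, gtn_eqF Hi1, ltn_eqF Hj1, gtn_eqF Hj1,
   ltn_eqF Hsi1, gtn_eqF Hsi1, ltn_eqF Hsj1, gtn_eqF Hsj1, ltn_eqF Hn1, gtn_eqF Hn1).
have HY : Y * Y = 0.
  rewrite /Y prodD !eq_ordE !sg_val !nn_val ?(sigma_even hn) !HF ?sigma_neq ?sigma_neq'.
  by rewrite !mulr0n !subr0 addr0 scaler0.
have HZ : Z * Z = 0.
  rewrite /Z prodD !eq_ordE !sg_val !nn_val ?(sigma_even hn) !HF ?sigma_neq ?sigma_neq'.
  by rewrite !mulr0n !subr0 addr0 scaler0.
have HYZ : Y * Z = (a * b) *: D i j.
  rewrite /Y /Z prodD !eq_ordE !sg_val !nn_val ?(sigma_even hn) !HF sigma_inj ij' eqxx.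
  by rewrite !mulr0n !subr0 addr0 mulr1n.
have HZY : Z * Y = (b * a) *: D (sg j) (sg i).
  rewrite /Y /Z prodD !eq_ordE !sg_val !nn_val ?(sigma_even hn) !HF eqxx.
  by rewrite ji' !mulr0n ?subr0 ?sub0r ?mulr1n ?add0r.
have HYZY : Y * Z * Y = 0.
  rewrite HYZ /Y prodD1 !eq_ordE !sg_val !nn_val ?(sigma_even hn) !HF.
  by rewrite ji' !mulr0n subr0 scaler0.
have HZYZ : Z * Y * Z = 0.
  rewrite HZY /Z prodD1 !eq_ordE !sg_val !nn_val ?(sigma_even hn) !HF ?sigma_inj ij'.
  by rewrite !mulr0n subr0 scaler0.
rewrite !E comm4 // HYZ HZY mulrC -scalerBr.
by [].
Qed.

Lemma oe_sym (i j : 'I_N) (z : R) : oe i j z = oe (sg j) (sg i) (- z).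
Proof. by apply/matrixP => k l; rewrite !mxE !sg_val !sigmaK; ring. Qed.

Lemma getc_delta m (l : 'I_m) k : getc (delta_mx l 0 : 'cV[R]_m) k = ((k == l) : bool)%:R.
Proof.
case: (ltnP k m) => Hk; first by rewrite (getc_lt _ Hk) mxE andbT.
rewrite getc_ge //; case: eqP => // Ekl; move: Hk; rewrite Ekl leqNgt ltn_ord.
by [].
Qed.

Lemma lin_d (j : 'I_n) (c : R) z : lin (c *: delta_mx 0 j) z = c * z j 0.
Proof. by rewrite /lin -scalemxAl -rowE !mxE. Qed.

Lemma adj_d (j : 'I_n) (c : R) g (i : 'I_n) :
  adj (c *: delta_mx 0 j) g i 0 = g * c * (((j : nat) == sigma i) : bool)%:R.
Proof.
rewrite /adj linearZ /= trmx_delta -scalemxAr -colE !mxE mulrA; congr (_ * _).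
Qed.

Lemma MA_oe (j : 'I_n) (c : R) : MA (c *: delta_mx 0 j) = oe nn (wj j) c.
Proof.
apply/matrixP => k l; rewrite /MA !mxE /E_alpha.
rewrite /ypart /gpart !lin_d !getc_delta !nn_val (sigma_even hn).
have Hj := ltn_ord j.
case: (ltnP k n) => Hk.
  rewrite (getc_lt _ Hk) mxE [(- adj _ _) _ _]mxE adj_d mxE getc_delta /=.
  rewrite (eq_ordE k nn) nn_val (ltn_eqF Hk) eq_sigma [sigma j == _]eq_sym [n.+1 == _]eq_sym.
  by case: (k == sigma j :> nat); case: (l == n.+1 :> nat); rewrite /= ?mul0r ?mulr0 ?mul1r ?mulr1 ?addr0.
have Hsj : (sigma j < n)%N := sigma_ltn hn Hj.
rewrite !eq_ordE /=; case: eqP => [Ek|Ek].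
  rewrite adj_d sigma_neq' !mulr0 subr0 mxE getc_delta Ek (gtn_eqF Hsj) /=.
  by rewrite mul0r subr0 [(j : nat) == _]eq_sym mulrC.
have Ek1 : (k : nat) = n.+1.
  by apply/eqP; rewrite eqn_leq -ltnS ltn_ord /= ltn_neqAle eq_sym Hk andbT; apply/eqP.
rewrite Ek1 (gtn_eqF (ltn_trans Hsj (ltnSn n))) /=.
by rewrite mul0r subr0 addr0.
Qed.

Lemma MB_oe (j : 'I_n) (c : R) : MB (c *: delta_mx 0 j) = oe (sg nn) (wj j) c.
Proof.
apply/matrixP => k l; rewrite /MB !mxE /E_beta.
rewrite /ypart /gpart !lin_d !getc_delta !sg_val !nn_val (sigma_even hn) (sigma_evenS hn).
have Hj := ltn_ord j.
case: (ltnP k n) => Hk.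
  rewrite (getc_lt _ Hk) mxE [(- adj _ _) _ _]mxE adj_d mxE getc_delta /=.
  rewrite (eq_ordE k (sg nn)) sgnn_val (ltn_eqF (ltn_trans Hk (ltnSn n))) eq_sigma [sigma j == _]eq_sym [n == _]eq_sym.
  by case: (k == sigma j :> nat); case: (l == n :> nat); rewrite /= ?mul0r ?mulr0 ?mul1r ?mulr1 ?addr0.
have Hsj : (sigma j < n)%N := sigma_ltn hn Hj.
rewrite !eq_ordE /=; case: eqP => [Ek|Ek].
  rewrite Ek (sigma_even hn) (ltn_eqF (ltnSn n)) (gtn_eqF Hsj) /=.
  by rewrite mul0r !subr0 addr0.
have Ek1 : (k : nat) = n.+1.
  by apply/eqP; rewrite eqn_leq -ltnS ltn_ord /= ltn_neqAle eq_sym Hk andbT; apply/eqP.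
rewrite adj_d sigma_neq' !mulr0 subr0 mxE getc_delta Ek1 (sigma_even hn) eqxx (gtn_eqF (ltn_trans Hsj (ltnSn n))) /=.
by rewrite mul0r subr0 [(j : nat) == _]eq_sym mulrC.
Qed.

End OE.




Section Main.
Variables (R : comUnitRingType) (n : nat).
Hypothesis hn : ~~ odd n.
Hypothesis h2 : (2%:R : R) \is a GRing.unit.
Local Notation N := n.+2.
Local Notation T := 'M[R]_N.
Local Notation nn := (nn n).
Local Notation sg := (sg hn).

Lemma inv_eq (x y : T) : x * y = 1 -> y * x = 1 -> x^-1 = y.
Proof.
move=> xy yx; have ux : x \is a GRing.unit by apply/unitrP; exists y.
by rewrite -[y](mulKr ux) xy mulr1.
Qed.

Lemma MA_unit (a : 'rV[R]_n) : MA a \is a GRing.unit.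
Proof.
apply/unitrP; exists (MA (- a)); rewrite -!mulmxE !MA_add // addNr addrN MA0.
by split.
Qed.
Lemma MB_unit (a : 'rV[R]_n) : MB a \is a GRing.unit.
Proof.
apply/unitrP; exists (MB (- a)); rewrite -!mulmxE !MB_add // addNr addrN MB0.
by split.
Qed.

Lemma DSER_unit J (x : T) : DSER_gen J x -> x \is a GRing.unit.
Proof. by case=> [[a _ ->]|[b _ ->]]; [exact: MA_unit|exact: MB_unit]. Qed.

Lemma MA_EO J (a : 'rV[R]_n) : (forall j, a 0 j \in J) -> EO_N J (MA a).
Proof.
move=> Ha; rewrite [a]row_sum_delta.
elim: (index_enum _) => [|j s IH].
  rewrite big_nil MA0; exact: gen_one.
rewrite big_cons -MA_add // mulmxE; apply: gen_mul => //; apply: gen_in.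
rewrite MA_oe //; exists nn, (wj j), (a 0 j); split => //.
  by rewrite eq_ordE /= gtn_eqF.
by rewrite /= (gtn_eqF (sigma_ltn hn (ltn_ord j))).
Qed.

Lemma MB_EO J (a : 'rV[R]_n) : (forall j, a 0 j \in J) -> EO_N J (MB a).
Proof.
move=> Ha; rewrite [a]row_sum_delta.
elim: (index_enum _) => [|j s IH].
  rewrite big_nil MB0; exact: gen_one.
rewrite big_cons -MB_add // mulmxE; apply: gen_mul => //; apply: gen_in.
rewrite MB_oe //; exists (sg nn), (wj j), (a 0 j); split => //.
  by rewrite eq_ordE /= (sigma_even hn) (gtn_eqF (leqW (ltn_ord j))).
by rewrite /= (sigma_even hn) (gtn_eqF (leqW (sigma_ltn hn (ltn_ord j)))).
Qed.

Lemma QH_N J (x : T) : EO_QH J x -> EO_N J x.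
Proof.
apply: gen_grp_sub => y [[a Ha ->]|[b Hb ->]]; [exact: MA_EO|exact: MB_EO].
Qed.

Lemma ed_in (J : {pred R}) (z : R) (j : 'I_n) : 0 \in J -> z \in J -> forall k, (z *: 'e_j : 'rV[R]_n) 0 k \in J.
Proof. by move=> H0 Hz k; rewrite !mxE eqxx /=; case: eqP => _; rewrite ?mulr1 ?mulr0. Qed.

Lemma oe_top (J : {pred R}) (i j : 'I_N) (z : R) : 0 \in J -> z \in J -> (n <= i)%N -> i != j ->
  (i : nat) != sigma j -> EO_QH J (oe i j z).
Proof.
move=> H0 Hz Hi ij isj.
have Hi2 := ltn_ord i; have Hj2 := ltn_ord j.
have ij' : (i : nat) != j by [].
rewrite eq_sigma in isj.
have [iE|iE] : (i : nat) = n \/ (i : nat) = n.+1 by lia.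
  rewrite iE (sigma_even hn) in isj ij'.
  have Hj : (j < n)%N by lia.
  have -> : i = nn by apply/val_inj.
  have -> : j = wj (Ordinal Hj) by apply/val_inj.
  rewrite -MA_oe //; apply: gen_in; left; exists (z *: 'e_(Ordinal Hj)) => //.
  exact: ed_in.
rewrite iE (sigma_evenS hn) in isj ij'.
have Hj : (j < n)%N by lia.
have -> : i = sg nn by apply/val_inj; rewrite /= (sigma_even hn).
have -> : j = wj (Ordinal Hj) by apply/val_inj.
rewrite -MB_oe //; apply: gen_in; right; exists (z *: 'e_(Ordinal Hj)) => //.
exact: ed_in.
Qed.

Lemma oe_bound (J : {pred R}) (i j : 'I_N) (z : R) : 0 \in J ->
  (forall x, x \in J -> - x \in J) -> z \in J -> (n <= i)%N || (n <= j)%N -> i != j ->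
  (i : nat) != sigma j -> EO_QH J (oe i j z).
Proof.
move=> H0 HN Hz /orP[Hi|Hj] ij isj; first exact: oe_top.
rewrite oe_sym; apply: oe_top => //; first exact: HN.
- have Hj2 := ltn_ord j.
  have [jE|jE] : (j : nat) = n \/ (j : nat) = n.+1 by lia.
    by rewrite sg_val jE (sigma_even hn).
  by rewrite sg_val jE (sigma_evenS hn).
- by rewrite eq_ordE !sg_val sigma_inj eq_sym.
- by rewrite !sg_val sigmaK eq_sym.
Qed.

Lemma oe_inv_eq (i j : 'I_N) (z : R) : i != j -> (i : nat) != sigma j ->
  (oe i j z)^-1 = oe i j (- z).
Proof.
move=> ij isj; apply: inv_eq; first exact: oe_inv.
by rewrite -{2}[z]opprK oe_inv.
Qed.

Lemma N_QH (x : T) : EO_N predT x -> EO_QH predT x.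
Proof.
apply: gen_grp_sub => y [i [j [z [ij isj _ ->]]]].
have H0 : (0 : R) \in predT by [].
have HN : forall x : R, x \in predT -> - x \in predT by [].
case: (boolP ((n <= i)%N || (n <= j)%N)) => H; first exact: oe_bound.
have Hi : (i < n)%N by lia.
have Hj : (j < n)%N by lia.
have Hsi := sigma_ltn hn Hi; have Hsj := sigma_ltn hn Hj.
rewrite -[z]mulr1 oe_comm //; repeat apply: gen_mul; apply: oe_bound => //;
  rewrite ?eq_ordE /= ?(sigma_even hn); lia.
Qed.

Lemma N_rel (I : {pred R}) (x : T) : 0 \in I -> (forall x, x \in I -> - x \in I) ->
  EO_N I x -> EO_QH_rel I x.
Proof.
move=> H0 HN; apply: gen_grp_sub => y [i [j [z [ij isj Hz ->]]]].
case: (boolP ((n <= i)%N || (n <= j)%N)) => H; first by apply: nc_in; exact: oe_bound.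
have Hi : (i < n)%N by lia.
have Hj : (j < n)%N by lia.
have Hsi := sigma_ltn hn Hi; have Hsj := sigma_ltn hn Hj.
rewrite -[z]mulr1 oe_comm // -!mulrA; apply: gen_mul.
  apply: nc_in; apply: oe_bound => //; rewrite ?eq_ordE /= ?(sigma_even hn); lia.
rewrite mulrA; apply: gen_in; exists (oe nn j 1), (oe i nn (- z)); split.
- apply: oe_bound => //; rewrite ?eq_ordE /= ?(sigma_even hn); lia.
- apply: oe_bound => //; first exact: HN.
  + rewrite ?eq_ordE /= ?(sigma_even hn); lia.
  + rewrite ?eq_ordE /= ?(sigma_even hn); lia.
  + rewrite ?eq_ordE /= ?(sigma_even hn); lia.
- rewrite oe_inv_eq //.
  + rewrite ?eq_ordE /= ?(sigma_even hn); lia.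
  + rewrite ?eq_ordE /= ?(sigma_even hn); lia.
Qed.

Lemma dir1 (I : {pred R}) (A : T) : EO_QH_rel I A -> EO_N_rel I A.
Proof.
apply: gen_grp_sub => y [g [h [Gg Hh ->]]]; apply: gen_in; exists g, h.
by split => //; apply: QH_N.
Qed.

Lemma dir2 (I : {pred R}) (A : T) : 0 \in I -> (forall x, x \in I -> - x \in I) ->
  EO_N_rel I A -> EO_QH_rel I A.
Proof.
move=> H0 HN; apply: gen_grp_sub => y [g [h [Gg Hh ->]]].
apply: nc_conj.
- exact: DSER_unit.
- exact: DSER_unit.
- exact: N_QH.
- exact: N_rel.
Qed.

End Main.

Theorem mainTheorem3 (R : comUnitRingType) (r : nat) (hr : (0 < r)%N)
  (h2 : (2%:R : R) \is a GRing.unit) (I : {pred R}) (hI : is_ideal I) :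
  forall A : 'M[R]_((r.*2).+2), EO_QH_rel I A <-> EO_N_rel I A.
Proof.
have hn : ~~ odd r.*2 by rewrite odd_double.
case: hI => H0 _ HM.
have HN : forall x, x \in I -> - x \in I by move=> x Hx; rewrite -mulN1r; apply: HM.
move=> A; split; [exact: dir1 | exact: dir2].
Qed.
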